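(* Let $K$ be an oriented virtual knot diagram. Let $m(K)$ be the diagram obtained from $K$ by switching all real crossings, and let $r(K)$ be $K$ with its orientation reversed. Then $$F_{m(K)}(t,s)=-F_K(t^{-1},s^{-1})\quad\text{and}\quad F_{r(K)}(t,s)=F_K(t^{-1},s).$$ Here $F_K(t^{-1},s^{-1})$ denotes the element obtained from $F_K(t,s)$ by replacing each basis element $t^{[p(s)]}$ by $t^{[-p(s^{-1})]}$. Likewise $F_K(t^{-1},s)$ is obtained by replacing $t^{[p(s)]}$ by $t^{[-p(s)]}$.
   Context: The Gauss diagram $G(K)$ of an oriented virtual knot diagram $K$ is built as follows. Take a counterclockwise-oriented circle. For each real crossing, join its two preimages by a chord directed from over- to undercrossing, labeled with the writhe $w(c)=\pm1$. Put $w(K)=\sum_c w(c)$. Let $d$ be a chord intersecting a chord $c$ (endpoints interleave). We say $d$ crosses $c$ from left to right if, viewing $c$ along its direction, the tail of $d$ lies on the left and its head on the right; right to left is the opposite. Let $r_1,\dots,r_n$ be the chords crossing $c$ from left to right and $l_1,\dots,l_m$ those crossing from right to left. Then $\mathrm{Ind}(c)=\sum_i w(r_i)-\sum_j w(l_j)$. Put $N=|\mathrm{Ind}(c)|$ and let $\phi$ be reduction mod $N$ into $\{0,\dots,N-1\}$ if $N\ge1$, and the identity if $N=0$. Define $$g_c(s)=\sum_i w(r_i)s^{\phi(\mathrm{Ind}(r_i))}-\sum_j w(l_j)s^{\phi(-\mathrm{Ind}(l_j))}.$$ Call Laurent polynomials $p,q\in\mathbb{Z}[s,s^{-1}]$ equivalent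 if $p(1)=q(1)$ and $p\equiv q\pmod{s^{|p(1)|}-1}$. Write $t^{[p]}$ for the corresponding basis element of the free abelian group on equivalence classes. Then $$F_K(t,s)=\sum_c w(c)\,t^{[g_c(s)]}-w(K)\,t^{[0]},$$ summing over all real crossings. *)

(* Defs.v *)
From HB Require Import structures.
From mathcomp Require Import all_boot all_order all_algebra.
From mathcomp Require Import boolp.
Set Implicit Arguments. Unset Strict Implicit. Unset Printing Implicit Defensive.
Import Order.TTheory GRing.Theory Num.Theory.
Local Open Scope ring_scope.

(* A Laurent polynomial is given as a formal sum of terms (c, e) meaning
   c * s^e (c, e : int).  Two lists denote the same Laurent polynomial
   iff they agree after multiplication by a large power of s. *)
Definition lpoly := seq (int * int).

(* s^M * p, as an honest polynomial (valid when all e + M >= 0) *)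
Definition lshift (M : nat) (p : lpoly) : {poly int} :=
  \sum_(t <- p) t.1 *: 'X^(absz (t.2 + M%:Z)).
Definition lp_ok (M : nat) (p : lpoly) : bool :=
  all (fun t : int * int => 0 <= t.2 + M%:Z) p.

(* p = q (mod s^k - 1) in Z[s,s^-1] = Z[s][1/s]:
   s^M (p - q) = H (s^k - 1) for some polynomial H and some M
   clearing all denominators. *)
Definition lcong (k : nat) (p q : lpoly) : Prop :=
  exists M : nat, exists H : {poly int},
    [&& lp_ok M p & lp_ok M q] /\ lshift M p - lshift M q = H * ('X^k - 1).

Definition lp_at1 (p : lpoly) : int := \sum_(t <- p) t.1.

Definition lequiv (p q : lpoly) : Prop :=
  lp_at1 p = lp_at1 q /\ lcong (absz (lp_at1 p)) p q.

(* A formal sum  sum_i a_i t^[p_i]  is a list of pairs (a_i, p_i);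
   its coefficient on the class of q is the sum of the a_i with p_i ~ q. *)
Definition fsum := seq (int * lpoly).
Definition fcoef (L : fsum) (q : lpoly) : int :=
  \sum_(x <- L) (if `[< lequiv x.2 q >] then x.1 else 0).
Definition feq (L1 L2 : fsum) : Prop := forall q, fcoef L1 q = fcoef L2 q.
Definition fneg (L : fsum) : fsum := [seq (- x.1, x.2) | x <- L].
Definition fmap (f : lpoly -> lpoly) (L : fsum) : fsum :=
  [seq (x.1, f x.2) | x <- L].
Definition inv_ts (p : lpoly) : lpoly := [seq (- t.1, - t.2) | t <- p].
Definition inv_t (p : lpoly) : lpoly := [seq (- t.1, t.2) | t <- p].

(* n chords indexed by 'I_n; endpoints are points of the counterclockwise
   oriented circle, encoded by integers (increasing = counterclockwise);
   chord c goes from tl c (over) to hd c (under); pos c <-> w(c) = +1. *)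
Record gauss (n : nat) := Gauss {
  tl : 'I_n -> int;
  hd : 'I_n -> int;
  pos : 'I_n -> bool }.

Definition wf_gauss n (G : gauss n) : Prop :=
  injective (tl G) /\ injective (hd G) /\ forall i j, tl G i <> hd G j.

Section GaussDefs.
Variables (n : nat) (G : gauss n).

Definition wr (c : 'I_n) : int := if pos G c then 1 else -1.
Definition writhe : int := \sum_(c < n) wr c.

(* x lies on the right of chord c (viewed from its tail towards its head):
   the counterclockwise open arc from tl c to hd c *)
Definition rightof (c : 'I_n) (x : int) : bool :=
  if tl G c < hd G c then (tl G c < x) && (x < hd G c)
  else (tl G c < x) || (x < hd G c).

Definition crossLR (c d : 'I_n) : bool :=
  [&& d != c, ~~ rightof c (tl G d) & rightof c (hd G d)].
Definition crossRL (c d : 'I_n) : bool :=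
  [&& d != c, rightof c (tl G d) & ~~ rightof c (hd G d)].

Definition Ind (c : 'I_n) : int :=
  \sum_(d < n | crossLR c d) wr d - \sum_(d < n | crossRL c d) wr d.

Definition phi (N : nat) (e : int) : int :=
  if N == 0%N then e else (e %% N%:Z)%Z.

Definition gpoly (c : 'I_n) : lpoly :=
  let N := absz (Ind c) in
  [seq (wr d, phi N (Ind d)) | d <- enum 'I_n & crossLR c d] ++
  [seq (- wr d, phi N (- Ind d)) | d <- enum 'I_n & crossRL c d].

Definition Finv : fsum :=
  [seq (wr c, gpoly c) | c <- enum 'I_n] ++ [:: (- writhe, [::])].

End GaussDefs.

(* m(K): all crossings switched: chords reversed, signs changed *)
Definition mirror n (G : gauss n) : gauss n :=
  Gauss (hd G) (tl G) (fun c => ~~ pos G c).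
(* r(K): orientation reversed: same chords and signs on the reflected circle *)
Definition reverse n (G : gauss n) : gauss n :=
  Gauss (fun c => - tl G c) (fun c => - hd G c) (pos G).

(* Main.v *)
Require Import Defs.
From HB Require Import structures.
From mathcomp Require Import all_boot all_order all_algebra.
From mathcomp Require Import boolp.
Import Order.TTheory GRing.Theory Num.Theory.
Local Open Scope ring_scope.
From mathcomp Require Import zify ring.
Import Defs.
Set Implicit Arguments. Unset Strict Implicit.
Lemma lshift_cons M (t : int * int) (p : lpoly) : lshift M (t :: p)%SEQ = t.1 *: 'X^(absz (t.2 + M%:Z)) + lshift M p.
Proof. by rewrite /lshift big_cons. Qed.
Lemma lshift_nil M : lshift M [::] = 0.
Proof. by rewrite /lshift big_nil. Qed.

Lemma lshift_shift M j p : lp_ok M p -> lshift (M + j) p = lshift M p * 'X^j.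
Proof.
elim: p => [|t p IH] /=; first by rewrite !lshift_nil mul0r.
move=> /andP[h1 h2]; rewrite !lshift_cons IH // mulrDl -scalerAl -exprD.
have -> : absz (t.2 + (M + j)%N%:Z) = addn (absz (t.2 + M%:Z)) j by lia.
by [].
Qed.

Lemma lp_ok_mono p M M' : lp_ok M p -> (M <= M')%N -> lp_ok M' p.
Proof.
move=> + le; elim: p => [|t p IH] //= /andP[h1 h2]; rewrite IH // andbT; lia.
Qed.

Lemma lp_ok_ex p : exists M, lp_ok M p.
Proof.
elim: p => [|t p [M IH]]; first by exists 0%N.
exists (M + absz t.2)%N => /=; rewrite (lp_ok_mono IH) ?leq_addr // andbT; lia.
Qed.

Lemma lcong_refl k p : lcong k p p.
Proof. have [M h] := lp_ok_ex p; exists M, 0; by rewrite h subrr mul0r. Qed.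

Lemma lcong_sym k p q : lcong k p q -> lcong k q p.
Proof.
move=> [M [H [/andP[h1 h2] e]]]; exists M, (- H); rewrite h1 h2; split=> //.
by rewrite mulNr -e opprB.
Qed.

Lemma lcong_trans k p q r : lcong k p q -> lcong k q r -> lcong k p r.
Proof.
move=> [M1 [H1 [/andP[h1 h2] e1]]] [M2 [H2 [/andP[h3 h4] e2]]].
exists (M1 + M2)%N, (H1 * 'X^M2 + H2 * 'X^M1).
rewrite (lp_ok_mono h1) ?leq_addr // (lp_ok_mono h4) ?leq_addl //; split=> //.
have -> : (lshift (M1 + M2) p - lshift (M1 + M2) r) =
   (lshift (M1 + M2) p - lshift (M1 + M2) q) + (lshift (M2 + M1) q - lshift (M2 + M1) r).
  by rewrite addnC addrA subrK.
rewrite !lshift_shift // -mulrBl -mulrBl e1 e2; ring.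
Qed.

Lemma lcong_cat k p q p' q' : lcong k p q -> lcong k p' q' -> lcong k (p ++ p') (q ++ q').
Proof.
move=> [M1 [H1 [/andP[h1 h2] e1]]] [M2 [H2 [/andP[h3 h4] e2]]].
exists (M1 + M2)%N, (H1 * 'X^M2 + H2 * 'X^M1).
rewrite /lp_ok !all_cat -!/(lp_ok _ _).
rewrite (lp_ok_mono h1) ?leq_addr // (lp_ok_mono h2) ?leq_addr //.
rewrite (lp_ok_mono h3) ?leq_addl // (lp_ok_mono h4) ?leq_addl //; split=> //.
rewrite /lshift !big_cat /= -!/(lshift _ _).
rewrite [in lshift (M1 + M2) p']addnC [in lshift (M1 + M2) q']addnC.
rewrite !lshift_shift //.
have -> : lshift M1 p * 'X^M2 + lshift M2 p' * 'X^M1 - (lshift M1 q * 'X^M2 + lshift M2 q' * 'X^M1)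
  = (lshift M1 p - lshift M1 q) * 'X^M2 + (lshift M2 p' - lshift M2 q') * 'X^M1 by ring.
rewrite e1 e2; ring.
Qed.

Lemma lcong_single k (c e : int) (j : nat) :
  lcong k [:: (c, e)] [:: (c, e + (j * k)%N%:Z)].
Proof.
exists (absz e); set a := absz (e + (absz e)%:Z).
exists (- (c%:P * 'X^a * \sum_(i < j) ('X^k) ^+ i)).
split; first by rewrite /lp_ok /= !andbT; apply/andP; split; lia.
rewrite !lshift_cons !lshift_nil /= !addr0.
have -> : absz (e + (j * k)%N%:Z + (absz e)%:Z) = addn a (k * j) by rewrite /a; lia.
rewrite exprD exprM -!mul_polyC.
rewrite -[('X^k) ^+ j](subrK 1) subrX1; ring.
Qed.

Lemma lcong_pair k (c a b : int) : (a %% k%:Z = b %% k%:Z)%Z -> lcong k [:: (c, a)] [:: (c, b)].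
Proof.
move=> h.
have eb : b = a + (divz b k%:Z - divz a k%:Z) * k%:Z.
  by rewrite mulrBl {1}(divz_eq b k%:Z) {1}(divz_eq a k%:Z) h; ring.
set q := (divz b k%:Z - divz a k%:Z) in eb.
case: (lerP 0 q) => hq.
  have -> : b = a + (absz q * k)%N%:Z by rewrite eb; lia.
  exact: lcong_single.
apply: lcong_sym.
have -> : a = b + (absz q * k)%N%:Z by rewrite eb; lia.
exact: lcong_single.
Qed.

Lemma lcong_map k (T : Type) (s : seq T) (f g : T -> int * int) :
  (forall x, (f x).1 = (g x).1 /\ ((f x).2 %% k%:Z = (g x).2 %% k%:Z)%Z) ->
  lcong k (map f s) (map g s).
Proof.
move=> hfg; elim: s => [|x s IH] /=; first exact: lcong_refl.
have [h1 h2] := hfg x.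
rewrite -[f x :: _]/([:: f x] ++ _) -[g x :: _]/([:: g x] ++ _).
apply: lcong_cat => //.
case: (f x) h1 h2 => c a; case: (g x) => c' b /= <- h2.
exact: lcong_pair.
Qed.

Lemma lp_at1_map (T : Type) (s : seq T) (f g : T -> int * int) :
  (forall x, (f x).1 = (g x).1) -> lp_at1 (map f s) = lp_at1 (map g s).
Proof. by move=> h; rewrite /lp_at1 !big_map; apply: eq_bigr. Qed.

Lemma lequiv_iff p p' : lequiv p p' -> forall q, lequiv p q <-> lequiv p' q.
Proof.
move=> [e c] q; rewrite /lequiv -e; split=> -[e2 c2]; split => //.
  exact: lcong_trans (lcong_sym c) c2.
exact: lcong_trans c c2.
Qed.

Lemma lequiv_perm p p' : perm_eq p p' -> lequiv p p'.
Proof.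
move=> h; split; first by rewrite /lp_at1 (perm_big _ h).
have [M hM] := lp_ok_ex p; exists M, 0.
rewrite hM /= /lp_ok -(perm_all _ h) -/(lp_ok _ _) hM /lshift (perm_big _ h) subrr mul0r.
by [].
Qed.
Lemma rightof_mirror n (G : gauss n) c x : tl G c <> hd G c -> x <> tl G c -> x <> hd G c ->
  rightof (mirror G) c x = ~~ rightof G c x.
Proof.
move=> h1 h2 h3; rewrite /rightof /=.
case: ifP => A; case: ifP => B; apply/idP/idP; lia.
Qed.
Lemma rightof_rev n (G : gauss n) c x : tl G c <> hd G c -> x <> - tl G c -> x <> - hd G c ->
  rightof (reverse G) c x = ~~ rightof G c (-x).
Proof.
move=> h1 h2 h3; rewrite /rightof /=.
case: ifP => A; case: ifP => B; apply/idP/idP; lia.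
Qed.
Lemma lp_at1_gpoly n (H : gauss n) c : lp_at1 (gpoly H c) = Ind H c.
Proof.
rewrite /lp_at1 /gpoly /= big_cat !big_map !big_filter /= sumrN /Ind.
by rewrite !big_enum_cond.
Qed.

Lemma phiE N e : phi N e = (e %% N%:Z)%Z.
Proof. by rewrite /phi; case: eqP => // ->; rewrite modz0. Qed.

Lemma lequiv_trans p r q : lequiv p r -> lequiv r q -> lequiv p q.
Proof. by move=> h1 h2; apply/(lequiv_iff h1). Qed.

Section G.
Variables (n : nat) (G : gauss n).
Hypothesis wf : wf_gauss G.

Lemma wf_facts c d : d != c ->
  [/\ tl G d <> tl G c, hd G d <> hd G c, tl G d <> hd G c, hd G d <> tl G c & tl G c <> hd G c].
Proof.
case: wf => i1 [i2 i3] /eqP ne; split => // h.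
- by apply: ne; apply: i1.
- by apply: ne; apply: i2.
- by apply: (i3 c d); rewrite h.
Qed.

Lemma crossLR_mirror c d : crossLR (mirror G) c d = crossLR G c d.
Proof.
rewrite /crossLR; case: (eqVneq d c) => [->|ne] //=.
have [h1 h2 h3 h4 h5] := wf_facts ne.
rewrite !rightof_mirror //.
by rewrite negbK andbC.
Qed.

Lemma crossRL_mirror c d : crossRL (mirror G) c d = crossRL G c d.
Proof.
rewrite /crossRL; case: (eqVneq d c) => [->|ne] //=.
have [h1 h2 h3 h4 h5] := wf_facts ne.
rewrite !rightof_mirror //.
by rewrite negbK andbC.
Qed.

Lemma crossLR_rev c d : crossLR (reverse G) c d = crossRL G c d.
Proof.
rewrite /crossLR /crossRL; case: (eqVneq d c) => [->|ne] //=.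
have [h1 h2 h3 h4 h5] := wf_facts ne.
rewrite !rightof_rev ?opprK ?negbK //; lia.
Qed.

Lemma crossRL_rev c d : crossRL (reverse G) c d = crossLR G c d.
Proof.
rewrite /crossLR /crossRL; case: (eqVneq d c) => [->|ne] //=.
have [h1 h2 h3 h4 h5] := wf_facts ne.
rewrite !rightof_rev ?opprK ?negbK //; lia.
Qed.

Lemma wr_mirror c : wr (mirror G) c = - wr G c.
Proof. by rewrite /wr /=; case: (pos G c); rewrite ?opprK. Qed.

Lemma wr_rev c : wr (reverse G) c = wr G c.
Proof. by []. Qed.

Lemma Ind_mirror c : Ind (mirror G) c = - Ind G c.
Proof.
rewrite /Ind (eq_bigl _ _ (crossLR_mirror c)) (eq_bigl _ _ (crossRL_mirror c)).
rewrite (eq_bigr _ (fun d _ => wr_mirror d)) [X in _ - X](eq_bigr _ (fun d _ => wr_mirror d)).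
by rewrite !sumrN opprB addrC opprK.
Qed.

Lemma Ind_rev c : Ind (reverse G) c = - Ind G c.
Proof.
rewrite /Ind (eq_bigl _ _ (crossLR_rev c)) (eq_bigl _ _ (crossRL_rev c)).
by rewrite opprB.
Qed.

Lemma writhe_mirror : writhe (mirror G) = - writhe G.
Proof. by rewrite /writhe (eq_bigr _ (fun d _ => wr_mirror d)) sumrN. Qed.

Lemma gpoly_mirror c : lequiv (gpoly (mirror G) c) (inv_ts (gpoly G c)).
Proof.
split.
  by rewrite lp_at1_gpoly /lp_at1 /inv_ts big_map sumrN -/(lp_at1 _) lp_at1_gpoly Ind_mirror.
rewrite lp_at1_gpoly Ind_mirror abszN /gpoly /inv_ts /= map_cat -!map_comp.
rewrite (eq_filter (crossLR_mirror c)) (eq_filter (crossRL_mirror c)).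
apply: lcong_cat; apply: lcong_map => d /=; rewrite wr_mirror !Ind_mirror ?abszN !phiE ?opprK; split => //.
- by rewrite modz_mod modzNm.
- by rewrite modzNm opprK modz_mod.
Qed.

Lemma gpoly_rev c : lequiv (gpoly (reverse G) c) (inv_t (gpoly G c)).
Proof.
have e : lequiv (gpoly (reverse G) c)
   ([seq (wr G d, phi (absz (Ind G c)) (- Ind G d)) | d <- enum 'I_n & crossRL G c d] ++
    [seq (- wr G d, phi (absz (Ind G c)) (Ind G d)) | d <- enum 'I_n & crossLR G c d]).
  split.
    rewrite /gpoly /lp_at1 !big_cat /= !big_map.
    rewrite (eq_filter (crossLR_rev c)) (eq_filter (crossRL_rev c)) //.
  rewrite lp_at1_gpoly Ind_rev abszN /gpoly /=.
  rewrite (eq_filter (crossLR_rev c)) (eq_filter (crossRL_rev c)).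
  apply: lcong_cat; apply: lcong_map => d /=; rewrite !Ind_rev ?abszN ?opprK; split => //.
apply: lequiv_trans e _; apply: lequiv_perm.
rewrite /gpoly /inv_t /= map_cat -!map_comp perm_catC.
rewrite [X in perm_eq _ (X ++ _)](eq_map (g := fun d => (- wr G d, phi `|Ind G c| (Ind G d)))) //.
rewrite [X in perm_eq _ (_ ++ X)](eq_map (g := fun d => (wr G d, phi `|Ind G c| (- Ind G d)))) //.
by move=> d /=; rewrite opprK.
Qed.

End G.

Lemma fcoef_cat L1 L2 q : fcoef (L1 ++ L2) q = fcoef L1 q + fcoef L2 q.
Proof. by rewrite /fcoef big_cat. Qed.

Theorem proposition5p2 (n : nat) (G : gauss n) :
  wf_gauss G ->
  feq (Finv (mirror G)) (fneg (fmap inv_ts (Finv G))) /\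
  feq (Finv (reverse G)) (fmap inv_t (Finv G)).
Proof.
move=> wf; split => q; rewrite /Finv /fneg /fmap !map_cat -!map_comp !fcoef_cat; congr (_ + _).
- rewrite /fcoef !big_map; apply: eq_bigr => c _ /=.
  rewrite (asbool_equiv_eq (lequiv_iff (gpoly_mirror wf c) q)) wr_mirror.
  by case: (`[< _ >]).
- by rewrite /= writhe_mirror opprK.
- rewrite /fcoef !big_map; apply: eq_bigr => c _ /=.
  by rewrite (asbool_equiv_eq (lequiv_iff (gpoly_rev wf c) q)).
Qed.
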